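(* Let $a,b:\mathbb{Z}_{\neq 0}\to\mathbb{R}$ be even functions ($a(-r)=a(r)$, $b(-r)=b(r)$) such that $a$ is not identically zero, $b(r)\to 0$ as $r\to\infty$, and $$(u-v)\,a(u)\,a(v) + (u+v)\,a(u+v)\,\bigl(b(u)-b(v)\bigr) = 0$$ for all $u,v\in\mathbb{Z}$ with $u\neq 0$, $v\neq 0$, $u+v\neq 0$. Let $E_a=\{r\in\mathbb{Z}_{>0}: a(r)\neq 0\}$ and $E_b=\{r\in\mathbb{Z}_{>0}: b(r)\neq 0\}$. Then exactly one of the following holds: 1. $E_a=\{R\}$ for some integer $R>0$ and $E_b=\emptyset$ (i.e. $b\equiv 0$); 2. there is an integer $R>0$ with $E_a=E_b=\{nR: n\in\mathbb{Z}_{>0}\}$, and either (a) $a(nR)=b(nR)=\frac{1}{n^2}a(R)$ for all $n\in\mathbb{Z}_{>0}$, or (b) $a(nR)=\frac{(-1)^{n+1}}{n^2}a(R)$ and $b(nR)=-\frac{1}{n^2}a(R)$ for all $n\in\mathbb{Z}_{>0}$. Moreover, the Hamiltonian of case (b) is unitarily equivalent to one of the form (a) under conjugation by $\hat U=\prod_{k=0}^{R-1}\prod_{n\in\mathbb{Z}}2\hat S^z_{2nR+k}$.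
   Context: Interpretation: $a,b$ are the coupling functions of the spin-$1/2$ chain $\hat H=\sum_{m<n}a(m-n)(\hat S^x_m\hat S^x_n+\hat S^y_m\hat S^y_n)+b(m-n)\hat S^z_m\hat S^z_n$ on $\mathbb{Z}$, and the displayed functional equation is exactly the condition that the total spin current $\hat J=\sum_{n}\sum_{r\ge1} r\,a(r)(\hat S^x_n\hat S^y_{n+r}-\hat S^y_n\hat S^x_{n+r})$ commutes with $\hat H$. Case 1 corresponds to $R$ decoupled nearest-neighbour XX chains on the sublattices $R\mathbb{Z}+k$; case 2(a) to $R$ decoupled Haldane–Shastry chains on those sublattices. *)

(* Defs.v *)
From HB Require Import structures.
From mathcomp Require Import all_boot all_order all_algebra.
From mathcomp Require Import all_classical all_reals all_analysis.
Set Implicit Arguments. Unset Strict Implicit. Unset Printing Implicit Defensive.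
Import Order.TTheory GRing.Theory Num.Theory.
Import numFieldTopology.Exports numFieldNormedType.Exports.
Local Open Scope ring_scope.
Local Open Scope classical_set_scope.

(* Couplings a, b : Z\{0} -> R are modelled as functions int -> R whose value
   at 0 is irrelevant (never used by any hypothesis or conclusion). *)

Definition supp_pos (R : realType) (f : int -> R) : set int :=
  [set r : int | 0 < r /\ f r != 0].

Definition pos_multiples (R0 : int) : set int :=
  [set r : int | exists n : nat, (0 < n)%N /\ r = n%:Z * R0].

(* The functional equation (commutation of the spin current with H). *)
Definition current_conserved (R : realType) (a b : int -> R) : Prop :=
  forall u v : int, u != 0 -> v != 0 -> u + v != 0 ->
    (u - v)%:~R * a u * a v + (u + v)%:~R * a (u + v) * (b u - b v) = 0.

(* Effect on the XY coupling of conjugating H by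
   U = prod_{k=0}^{R-1} prod_{n in Z} 2 S^z_{2nR+k}:
   the operators S^x_m, S^y_m change sign iff floor(m/R) is even, so the
   coupling between sites m, m' with m - m' = j R is multiplied by (-1)^j;
   b is unchanged.  (Off multiples of R the coupling a vanishes in case 2.) *)
Definition twist (R : realType) (R0 : int) (a : int -> R) : int -> R :=
  fun r => (-1) ^ (r %/ R0)%Z * a r.

Definition form_a (R : realType) (R0 : int) (a b : int -> R) : Prop :=
  forall n : nat, (0 < n)%N ->
    a (n%:Z * R0) = a R0 / (n%:R) ^+ 2 /\ b (n%:Z * R0) = a R0 / (n%:R) ^+ 2.

Definition form_b (R : realType) (R0 : int) (a b : int -> R) : Prop :=
  forall n : nat, (0 < n)%N ->
    a (n%:Z * R0) = (-1) ^+ n.+1 / (n%:R) ^+ 2 * a R0 /\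
    b (n%:Z * R0) = - (a R0 / (n%:R) ^+ 2).

Definition case1 (R : realType) (a b : int -> R) : Prop :=
  exists R0 : int, 0 < R0 /\ supp_pos a = [set R0] /\ supp_pos b = set0.

Definition case2 (R : realType) (a b : int -> R) : Prop :=
  exists R0 : int, 0 < R0 /\
    supp_pos a = pos_multiples R0 /\ supp_pos b = pos_multiples R0 /\
    (form_a R0 a b \/
     (form_b R0 a b /\ form_a R0 (twist R0 a) b)).

(* Main.v *)
Require Import Defs.
From HB Require Import structures.
From mathcomp Require Import all_boot all_order all_algebra.
From mathcomp Require Import all_classical all_reals all_analysis.
From mathcomp Require Import zify ring lra.
Import Order.TTheory GRing.Theory Num.Theory.
Import numFieldTopology.Exports numFieldNormedType.Exports.
Local Open Scope ring_scope.
Local Open Scope classical_set_scope.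
Set Implicit Arguments. Unset Strict Implicit.

Lemma lim_eps (R : realType) (b : int -> R) :
  (fun n : nat => b n%:Z) @ \oo --> 0 ->
  forall e : R, 0 < e -> exists N, forall n, (N <= n)%N -> `|b n%:Z| < e.
Proof.
move=> hl e e0. move/cvgrPdist_lt: hl => /(_ e e0). case=> N _ HN.
exists N => n /HN /=. by rewrite sub0r normrN.
Qed.

Lemma per_zero (R : realType) (b : int -> R) :
  (fun n : nat => b n%:Z) @ \oo --> 0 ->
  forall m k : nat, (0 < k)%N -> (forall j : nat, b (m + j * k)%N%:Z = b m%:Z) ->
  b m%:Z = 0.
Proof.
move=> hl m k k0 hp. apply/eqP; apply/negPn/negP => hne.
have e0 : 0 < `|b m%:Z| by rewrite normr_gt0.
have [N HN] := lim_eps hl e0.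
have H := HN (m + N * k)%N. rewrite hp ltxx in H.
have: (N <= m + N * k)%N by nia.
by move/H.
Qed.

Lemma add_nz (R : realType) (a b : int -> R) : current_conserved a b ->
  forall u v : int, u != 0 -> v != 0 -> u + v != 0 -> u != v ->
  a u != 0 -> a v != 0 -> a (u + v) != 0.
Proof.
move=> hcc u v u0 v0 uv0 uv au av. apply/negP => /eqP H.
have := hcc u v u0 v0 uv0. rewrite H mulr0 mul0r addr0 => /eqP.
rewrite !mulf_eq0 intr_eq0 subr_eq0 (negbTE uv) (negbTE au) (negbTE av).
by [].
Qed.

Lemma Ek (R : realType) (a b : int -> R) : current_conserved a b ->
  forall k : int, k != 0 -> forall m n : int, m != 0 -> n != 0 -> m + n != 0 ->
  (m - n)%:~R * a (m * k) * a (n * k) +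
  (m + n)%:~R * a ((m + n) * k) * (b (m * k) - b (n * k)) = 0.
Proof.
move=> hcc k k0 m n m0 n0 mn0.
have := hcc (m * k) (n * k). rewrite -mulrBl -mulrDl !intrM => H.
have {}H := H (mulf_neq0 m0 k0) (mulf_neq0 n0 k0) (mulf_neq0 mn0 k0).
apply: (mulIf (x := k%:~R)); first by rewrite intr_eq0.
rewrite mul0r -H. ring.
Qed.

Lemma lim_K (R : realType) (b : int -> R) :
  (fun n : nat => b n%:Z) @ \oo --> 0 ->
  forall (k : nat) (K C : R), (0 < k)%N ->
  (forall n : nat, (0 < n)%N -> b (n%:Z * k%:Z) * n%:R ^+ 2 = K * n%:R ^+ 2 + C) ->
  K = 0.
Proof.
move=> hl k K C k0 hK. apply/eqP; apply/negPn/negP => Kn0.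
have e0 : 0 < `|K| / 2 by rewrite divr_gt0 // normr_gt0.
have [N HN] := lim_eps hl e0.
have c0 : 0 <= `|C| / (`|K| / 2) by rewrite divr_ge0 // ltW.
set M := Num.Def.archi_bound (`|C| / (`|K| / 2)).
have hM := archi_boundP c0.
set n := (N + M).+1.
have n0 : (0 < n)%N by [].
have hMn : (M%:R : R) <= n%:R by rewrite ler_nat /n; lia.
have hx : (1 : R) <= n%:R by rewrite (ler_nat R 1 n).
have hb := HN (n * k)%N ltac:(rewrite /n; nia).
rewrite PoszM in hb.
have hC : `|C| < `|K| / 2 * n%:R.
  rewrite mulrC -ltr_pdivrMr //. exact: lt_le_trans hM hMn.
have heq := hK n n0.
have hK2 : K * n%:R ^+ 2 = b (n%:Z * k%:Z) * n%:R ^+ 2 - C by rewrite heq; ring.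
have hn : `|K| * n%:R ^+ 2 <= `|b (n%:Z * k%:Z)| * n%:R ^+ 2 + `|C|.
  have -> : `|K| * n%:R ^+ 2 = `|K * n%:R ^+ 2| by rewrite normrM normrX normr_nat.
  rewrite hK2. apply: (le_trans (ler_normB _ _)).
  by rewrite normrM normrX normr_nat.
set x := (n%:R : R) in hx hC hn.
set B := `|b _| in hb hn.
have hB : 0 <= B by rewrite /B.
have hKp : 0 < `|K| by rewrite normr_gt0.
have x0 : 0 < x by apply: lt_le_trans hx.
have x2 : 0 < x ^+ 2 by rewrite exprn_gt0.
have h1 : B * x ^+ 2 < `|K| / 2 * x ^+ 2 by rewrite ltr_pM2r.
have h2 : `|K| / 2 * x <= `|K| / 2 * x ^+ 2.
  rewrite ler_pM2l // expr2 -{1}(mulr1 x) ler_pM2l //.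
have : `|K| * x ^+ 2 < `|K| * x ^+ 2.
  apply: (le_lt_trans hn). apply: (lt_le_trans (ltrD h1 hC)).
  apply: (le_trans (lerD (lexx _) h2)). rewrite -mulrDl -splitr. done.
by rewrite ltxx.
Qed.

Lemma alg1 (F : realFieldType) (m p q r A D : F) :
  (m - 1) * q * A + (m + 1) * r * D = 0 ->
  (m + 1) * q * A + (m - 1) * p * D = 0 ->
  q * A * ((m + 1) ^+ 2 * r - (m - 1) ^+ 2 * p) = 0.
Proof.
move=> h1 h2.
have -> : q * A * ((m + 1) ^+ 2 * r - (m - 1) ^+ 2 * p) =
  (m + 1) * r * ((m + 1) * q * A + (m - 1) * p * D)
  - (m - 1) * p * ((m - 1) * q * A + (m + 1) * r * D) by ring.
by rewrite h1 h2 !mulr0 subr0.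
Qed.

Lemma alg2 (F : realFieldType) (A G a2 a3 a4 a5 b1 b2 b3 : F) : A != 0 ->
  4 * a2 = G -> 9 * a3 = A -> 16 * a4 = G -> 25 * a5 = A ->
  (2 - 1) * a2 * A + (2 + 1) * a3 * (b2 - b1) = 0 ->
  (3 - 1) * a3 * A + (3 + 1) * a4 * (b3 - b1) = 0 ->
  (3 - 2) * a3 * a2 + (3 + 2) * a5 * (b3 - b2) = 0 ->
  G ^+ 2 = A ^+ 2.
Proof.
move=> nA e2 e3 e4 e5 h1 h2 h3.
have E2 : a2 = G / 4 by rewrite -e2; field.
have E3 : a3 = A / 9 by rewrite -e3; field.
have E4 : a4 = G / 16 by rewrite -e4; field.
have E5 : a5 = A / 25 by rewrite -e5; field.
rewrite E2 E3 E4 E5 in h1 h2 h3.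
have f1 : 3 * G + 4 * (b2 - b1) = 0.
  apply: (mulIf nA). rewrite mul0r.
  have -> : (3 * G + 4 * (b2 - b1)) * A =
     12 * ((2 - 1) * (G / 4) * A + (2 + 1) * (A / 9) * (b2 - b1)) by field.
  by rewrite h1 mulr0.
have f2 : 8 * A ^+ 2 + 9 * G * (b3 - b1) = 0.
  have -> : 8 * A ^+ 2 + 9 * G * (b3 - b1) =
     36 * ((3 - 1) * (A / 9) * A + (3 + 1) * (G / 16) * (b3 - b1)) by field.
  by rewrite h2 mulr0.
have f3 : 5 * G + 36 * (b3 - b2) = 0.
  apply: (mulIf nA). rewrite mul0r.
  have -> : (5 * G + 36 * (b3 - b2)) * A =
     180 * ((3 - 2) * (A / 9) * (G / 4) + (3 + 2) * (A / 25) * (b3 - b2)) by field.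
  by rewrite h3 mulr0.
apply/eqP; rewrite -subr_eq0; apply/eqP.
have -> : G ^+ 2 - A ^+ 2 =
  (9 * G * (5 * G + 36 * (b3 - b2)) - 36 * (8 * A ^+ 2 + 9 * G * (b3 - b1))
   + 81 * G * (3 * G + 4 * (b2 - b1))) / 288 by field.
by rewrite f1 f2 f3 !mulr0 subr0 addr0 mul0r.
Qed.

Lemma alg3 (F : realFieldType) (m p q A D : F) :
  (m - 1) * p * A + (m + 1) * q * D = 0 ->
  ((m + 1) ^+ 2 * q) * m ^+ 2 * D = - (m ^+ 2 - 1) * (m ^+ 2 * p) * A.
Proof.
move=> h. apply/eqP; rewrite -subr_eq0; apply/eqP.
have -> : (m + 1) ^+ 2 * q * m ^+ 2 * D - - (m ^+ 2 - 1) * (m ^+ 2 * p) * A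
  = (m + 1) * m ^+ 2 * ((m - 1) * p * A + (m + 1) * q * D) by ring.
by rewrite h mulr0.
Qed.

Lemma shift (R : realType) (a b : int -> R) :
  (forall r : int, r != 0 -> a (- r) = a r) ->
  (forall r : int, r != 0 -> b (- r) = b r) ->
  current_conserved a b ->
  forall u k : int, u != 0 -> u + k != 0 -> k != 0 -> a k != 0 ->
  (a (u + k) = 0 \/ a u = 0) -> b (u + k) = b u.
Proof.
move=> ha hb hcc u k u0 uk0 k0 ak h.
have s0 : (u + k) + - u != 0 by rewrite addrAC subrr add0r.
have nu : - u != 0 by rewrite oppr_eq0.
have := hcc (u + k) (- u) uk0 nu s0.
rewrite [u + k + - u]addrAC subrr add0r ha // hb //.
have -> : (u + k - - u)%:~R * a (u + k) * a u = 0 by case: h => ->; rewrite ?mulr0 ?mul0r.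
rewrite add0r => /eqP; rewrite !mulf_eq0 intr_eq0 (negbTE k0) (negbTE ak) /= subr_eq0.
by move/eqP.
Qed.

Lemma alg1' (F : realFieldType) (mm mp p q r A D : F) :
  mm * q * A + mp * r * D = 0 ->
  mp * q * A + mm * p * D = 0 ->
  q * A * (mp ^+ 2 * r - mm ^+ 2 * p) = 0.
Proof.
move=> h1 h2.
have -> : q * A * (mp ^+ 2 * r - mm ^+ 2 * p) =
  mp * r * (mp * q * A + mm * p * D)
  - mm * p * (mm * q * A + mp * r * D) by ring.
by rewrite h1 h2 !mulr0 subr0.
Qed.

Lemma alg4 (F : realFieldType) (x bn b1 A gn s : F) : gn != 0 -> s ^+ 2 = 1 ->
  (s * gn) * x * (bn - b1) = - (x - 1) * gn * A ->
  bn * x = (b1 - s * A) * x + s * A.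
Proof.
move=> g0 s2 h. apply/eqP; rewrite -subr_eq0; apply/eqP. apply: (mulfI g0).
have -> : gn * (bn * x - ((b1 - s * A) * x + s * A)) =
  s * ((s * gn) * x * (bn - b1) - (- (x - 1) * gn * A)) + (1 - s ^+ 2) * gn * x * (bn - b1) by ring.
by rewrite h subrr s2 subrr !mulr0 !mul0r addr0.
Qed.

Lemma sgn2 (F : realFieldType) (n : nat) : (-1) ^+ n * (-1) ^+ n = 1 :> F.
Proof. by rewrite -exprD addnn -mul2n exprM expr2 mulrNN mulr1 expr1n. Qed.

Lemma par (F : realFieldType) (g T : nat -> F) :
  (forall j, g j.+3 = g j.+1) -> (forall j, T j.+3 = T j.+1) ->
  g 1%N = T 1%N -> g 2%N = T 2%N -> forall n, (0 < n)%N -> g n = T n.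
Proof.
move=> hg hT h1 h2.
have H : forall j, g j.+1 = T j.+1 /\ g j.+2 = T j.+2.
  elim=> [|j [IH1 IH2]]; first by [].
  by split => //; rewrite hg hT.
by case=> // n _; case: (H n).
Qed.

Theorem theorem1 (R : realType) (a b : int -> R) :
  (forall r : int, r != 0 -> a (- r) = a r) ->
  (forall r : int, r != 0 -> b (- r) = b r) ->
  (exists r : int, r != 0 /\ a r != 0) ->
  (fun n : nat => b n%:Z) @ \oo --> 0 ->
  current_conserved a b ->
  ((case1 a b /\ ~ case2 a b) \/ (~ case1 a b /\ case2 a b)).
Proof.
move=> ha hb hne hl hcc.
have aabs : forall x : int, a `|x|%N%:Z = a x.
  move=> x; rewrite abszE; case: (ger0P x) => hx //.
  rewrite ha //. by rewrite ltr0_neq0.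
have hex : exists n : nat, (0 < n)%N && (a n%:Z != 0).
  case: hne => r [r0 ar]; exists `|r|%N. rewrite aabs ar andbT absz_gt0 //.
case: (ex_minnP hex) => k /andP[k0 ak] kmin.
have Kn0 : k%:Z != 0 by lia.
have posE : forall x : int, 0 < x -> x = (`|x|%N)%:Z by move=> x hx; lia.
case: (pselect (exists w : nat, [/\ (0 < w)%N, w != k & a w%:Z != 0])) =>
  [[w [w0 wk aw]] | hno].
  have hdiv : forall n : nat, (0 < n)%N -> a n%:Z != 0 -> (k %| n)%N.
    elim/ltn_ind => n IH n0 an.
    have kn : (k <= n)%N by apply: kmin; rewrite n0 an.
    case: (eqVneq n k) => [-> | nk]; first exact: dvdnn.
    have hsub : a (n - k)%N%:Z != 0.
      rewrite -subzn //. rewrite -(ha k%:Z) // in ak.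
      apply: (add_nz hcc) => //; try lia.
    have := IH (n - k)%N ltac:(lia) ltac:(lia) hsub.
    move=> h; rewrite -(subnK kn); exact: dvdn_add h (dvdnn k).
  set K := k%:Z.
  have akK : a K != 0 by [].
  have akN : a (- K) != 0 by rewrite ha.
  have a2 : a (2%:Z * K) != 0.
    have [q wq] : exists q : nat, w = (q.+2 * k)%N.
      have := hdiv w w0 aw => /dvdnP [q hq]. exists q.-2. 
      have q2 : (2 <= q)%N.
        move: wk w0; rewrite hq. case: q {hq} => [|[|q]] /=; [by rewrite mul0n | by rewrite mul1n eqxx | done].
      by rewrite hq; congr (_ * _)%N; lia.
    have : a (q.+2%:Z * K) != 0 by rewrite -PoszM -wq.
    elim: q {wq} => [//|q IH] h. apply: IH.
    have -> : q.+2%:Z * K = q.+3%:Z * K + - K by rewrite /K; lia.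
    apply: (add_nz hcc) => //; rewrite /K; lia.
  have aall : forall n : nat, (0 < n)%N -> a (n%:Z * K) != 0.
    case=> // [] [_|]; first by rewrite mul1r.
    move=> n _; elim: n => [//|n IH].
    have -> : n.+3%:Z * K = n.+2%:Z * K + K by rewrite /K; lia.
    apply: (add_nz hcc) => //; rewrite /K; lia.
  have anm : forall m : nat, (0 < m)%N -> ~~ (k %| m)%N -> a m%:Z = 0.
    move=> m m0 hm; apply/eqP/negPn/negP => h. by move: hm; rewrite hdiv.
  have hbz : forall m : nat, (0 < m)%N -> ~~ (k %| m)%N -> b m%:Z = 0.
    move=> m m0 hm. apply: (per_zero hl k0) => j. elim: j => [|j IH]; first by rewrite mul0n addn0.
    rewrite -IH mulSn addnCA PoszD addrC. apply: (shift ha hb hcc) => //; try lia.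
    right. apply: anm; first lia. by rewrite dvdn_addl // dvdn_mull.
  set A := a K.
  have Ekk := Ek hcc Kn0.
  set g := fun n : nat => (n%:R ^+ 2 : R) * a (n%:Z * K).
  have g1 : g 1%N = A by rewrite /g mul1r expr1n mul1r.
  have hrec : forall j, g j.+3 = g j.+1.
    move=> j.
    have E1 := Ekk j.+2%:Z 1 ltac:(lia) ltac:(lia) ltac:(lia).
    have E2 := Ekk j.+2%:Z (-1) ltac:(lia) ltac:(lia) ltac:(lia).
    have e1 : j.+2%:Z - 1 = j.+1%:Z by lia.
    have e2 : j.+2%:Z + 1 = j.+3%:Z by lia.
    have e3 : j.+2%:Z - -1 = j.+3%:Z by lia.
    have e4 : j.+2%:Z + -1 = j.+1%:Z by lia.
    rewrite e1 e2 mul1r in E1. rewrite e3 e4 mulN1r ha // hb // in E2.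
    have := alg1' E1 E2. move/eqP; rewrite !mulf_eq0 (negbTE (aall j.+2 isT)) (negbTE akK) /=.
    rewrite subr_eq0 => /eqP. by rewrite /g.
  set G := g 2%N.
  have g3 : g 3%N = A by rewrite hrec g1.
  have g4 : g 4%N = G by rewrite hrec.
  have g5 : g 5%N = A by rewrite hrec g3.
  have hG : G ^+ 2 = A ^+ 2.
    have E21 := Ekk 2 1 isT isT isT.
    have E31 := Ekk 3 1 isT isT isT.
    have E32 := Ekk 3 2 isT isT isT.
    rewrite intrB intrD mul1r (_ : (2 + 1 : int) = 3) // in E21.
    rewrite intrB intrD mul1r (_ : (3 + 1 : int) = 4) // in E31.
    rewrite intrB intrD (_ : (3 + 2 : int) = 5) // in E32.
    apply: (alg2 akK _ _ _ _ E21 E31 E32).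
    - by rewrite /G /g -natrX.
    - by move: g3; rewrite /g -natrX.
    - by move: g4; rewrite /g /G /g -natrX.
    - by move: g5; rewrite /g -natrX.
  have gnz : forall n, (0 < n)%N -> g n != 0.
    move=> n n0. apply: mulf_neq0; last exact: aall.
    by rewrite expf_eq0 /= pnatr_eq0 -lt0n.
  have hbeta : forall s : R, s ^+ 2 = 1 -> (forall n, (0 < n)%N -> g n.+1 = s * g n) ->
      forall n, (0 < n)%N -> b (n%:Z * K) = s * A / n%:R ^+ 2.
    move=> s s2 hs.
    have hx : forall n, (0 < n)%N ->
        b (n%:Z * k%:Z) * n%:R ^+ 2 = (b K - s * A) * n%:R ^+ 2 + s * A.
      move=> n n0.
      have E := Ekk n%:Z 1 ltac:(lia) isT ltac:(lia).
      rewrite (_ : n%:Z + 1 = n.+1%:Z) ?mul1r ?intrB in E; last by lia.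
      have E' : (n%:R - 1) * a (n%:Z * K) * A + (n%:R + 1) * a (n.+1%:Z * K) * (b (n%:Z * K) - b K) = 0.
        by rewrite natr1; exact: E.
      have := alg3 E'. rewrite natr1.
      rewrite (_ : n.+1%:R ^+ 2 * a (n.+1%:Z * K) = g n.+1) // hs //.
      rewrite (_ : n%:R ^+ 2 * a (n%:Z * K) = g n) //.
      exact: alg4 (gnz n n0) s2.
    have K0 := lim_K hl k0 hx.
    move=> n n0. have := hx n n0. rewrite K0 mul0r add0r => <-.
    field. by rewrite ?expf_eq0 /= ?pnatr_eq0 -?lt0n.
  have nz2 : forall n : nat, (0 < n)%N -> (n%:R ^+ 2 : R) != 0.
    by move=> n n0; rewrite expf_eq0 /= pnatr_eq0 -lt0n.
  have mulP : forall x : int, 0 < x -> (k %| `|x|%N)%N -> pos_multiples K x.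
    move=> x x0 /dvdnP [q hq]. exists q; split.
      move: hq; case: q => // hq. lia.
    by rewrite (posE x x0) hq PoszM.
  have suppa : supp_pos a = pos_multiples K.
    apply/seteqP; split => x /=.
    - case=> x0 ax. apply: mulP => //. apply: hdiv; first lia. by rewrite aabs.
    - case=> n [n0 ->]. split; [rewrite /K; lia | exact: aall].
  have suppb : forall s : R, s ^+ 2 = 1 ->
      (forall n, (0 < n)%N -> b (n%:Z * K) = s * A / n%:R ^+ 2) ->
      supp_pos b = pos_multiples K.
    move=> s s2 hbn. apply/seteqP; split => x /=.
    - case=> x0 bx. apply: mulP => //. apply/negPn/negP => hd.
      move: bx; rewrite (posE x x0) hbz ?eqxx //. lia.
    - case=> n [n0 ->]. split; first by rewrite /K; lia.
      rewrite hbn // !mulf_neq0 //.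
      + by apply/negP => /eqP s0; move: s2; rewrite s0 expr0n /= => /eqP; rewrite eq_sym oner_eq0.
      + by rewrite invr_eq0 nz2.
  have not1 : ~ case1 a b.
    case=> R1 [_ [h _]].
    have h1 : supp_pos a K by rewrite suppa; exists 1%N; rewrite mul1r.
    have h2 : supp_pos a (2%:Z * K) by rewrite suppa; exists 2%N.
    rewrite h /= in h1 h2. move: h1 h2; rewrite /K. lia.
  right; split => //.
  move/eqP: hG; rewrite eqf_sqr => /orP [/eqP GA | /eqP GA].
  - have gall : forall n, (0 < n)%N -> g n = A.
      by apply: (par (T := fun _ => A)) => //; rewrite -GA.
    have hs : forall n, (0 < n)%N -> g n.+1 = 1 * g n by move=> n n0; rewrite mul1r !gall.
    have hb1 := hbeta 1 (expr1n _ _) hs.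
    exists K; split; first by rewrite /K; lia.
    split => //; split; first exact: (suppb 1 (expr1n _ _) hb1).
    left => n n0; split; last by rewrite hb1 // mul1r.
    apply: (mulfI (nz2 n n0)). have := gall n n0. rewrite /g => ->. rewrite /A; field. by rewrite pnatr_eq0 -lt0n.
  - set T := fun n : nat => ((-1) ^+ n.+1 * A : R).
    have gall : forall n, (0 < n)%N -> g n = T n.
      apply: par => //.
      + by move=> j; rewrite /T !exprS; ring.
      + by rewrite g1 /T expr2 mulrNN mulr1 mul1r.
      + rewrite -/G GA /T !exprS expr0. rewrite /A; ring.
    have hs : forall n, (0 < n)%N -> g n.+1 = -1 * g n.
      by move=> n n0; rewrite !gall // /T exprS mulrA.
    have s2 : (-1) ^+ 2 = 1 :> R by rewrite expr2 mulrNN mulr1.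
    have hb1 := hbeta (-1) s2 hs.
    exists K; split; first by rewrite /K; lia.
    split => //; split; first exact: (suppb (-1) s2 hb1).
    right; split.
    + move=> n n0; split; last by rewrite hb1 // mulN1r mulNr.
      apply: (mulfI (nz2 n n0)). have := gall n n0. rewrite /g /T => ->. rewrite /A; field. by rewrite pnatr_eq0 -lt0n.
    + move=> n n0. rewrite /twist mulzK // divzz Kn0 expr1z -exprnP.
      split; last by rewrite hb1.
      have h := gall n n0. rewrite /g /T in h.
      have -> : a (n%:Z * K) = (-1) ^+ n.+1 * A / n%:R ^+ 2.
        apply: (mulfI (nz2 n n0)). rewrite h /A. field. by rewrite pnatr_eq0 -lt0n.
      transitivity ((-1) ^+ n * (-1) ^+ n * (-1 * A / n%:R ^+ 2)).
        rewrite exprS /A. field. by rewrite pnatr_eq0 -lt0n.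
      by rewrite sgn2 mul1r.
have hsa : forall x : int, 0 < x -> a x != 0 -> x = k%:Z.
  move=> x x0 ax. rewrite (posE x x0); congr Posz.
  apply/eqP; apply/negPn/negP => hw. apply: hno; exists `|x|%N; split => //.
    lia.
  by rewrite aabs.
have hsb : forall m : nat, (0 < m)%N -> b m%:Z = 0.
  move=> m m0. apply: (per_zero hl k0) => j. elim: j => [|j IH]; first by rewrite mul0n addn0.
  rewrite -IH mulSn addnCA PoszD addrC. apply: (shift ha hb hcc) => //; try lia.
  left. apply/eqP/negPn/negP => h. have := hsa _ _ h. lia.
left; split.
  exists k%:Z; split; first by lia.
  split; apply/seteqP; split => x /=.
  - by case=> x0 ax; apply: hsa.
  - by move=> ->; split => //; lia.
  - case=> x0; rewrite (posE x x0) hsb ?eqxx //; lia.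
  - by [].
case=> R1 [R10 [hsa' _]].
have h1 : supp_pos a R1 by rewrite hsa'; exists 1%N; split => //; rewrite mul1r.
have h2 : supp_pos a (2%:Z * R1) by rewrite hsa'; exists 2%N.
case: h1 => h1a h1b; case: h2 => h2a h2b.
have := hsa _ h1a h1b; have := hsa _ h2a h2b. lia.
Qed.
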